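(* Let $\mathcal H$, $\mathcal O$, $\mathcal U$, $e_a$, $X_{e_a}$, $Y_{e_a}$ be as in the context. Identify $\mathcal O^*$ with $\mathcal O$ via $\xi(a)=\operatorname{tr}(\widetilde\xi a)$, and for $1\le k\le n$ let $\mathcal D^k=\{\xi\in\mathcal O^*:\widetilde\xi\ge0,\ \operatorname{tr}\widetilde\xi=1,\ \operatorname{rank}\widetilde\xi=k\}$ (the density operators of rank $k$), which is a smooth embedded submanifold of $\mathcal O^*$ contained in $\mathcal U$. Then for every $a\in\mathcal O$ and every $k$, the vector fields $X_{e_a}$ and $Y_{e_a}$ are tangent to $\mathcal D^k$ at every point of $\mathcal D^k$. Explicitly, at $\rho\in\mathcal D^k$, the tangent vectors $X_{e_a}(\rho)$ and $Y_{e_a}(\rho)$ correspond to the Hermitian operators $\tfrac{i}{2}[a,\widetilde\rho]$ and $\tfrac12(a\widetilde\rho+\widetilde\rho a)-\operatorname{tr}(\widetilde\rho a)\widetilde\rho$ respectively.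
   Context: $\mathcal H$ is a complex Hilbert space of dimension $n<\infty$; $\mathcal O$ the real vector space of Hermitian operators; $[[a,b]]=-\tfrac{i}{2}(ab-ba)$, $a\odot b=\tfrac12(ab+ba)$; $f_a(\xi)=\xi(a)$; $\mathcal U=\{\xi:\xi(\mathbb I)\neq0\}$; $e_a=f_a/f_{\mathbb I}$ on $\mathcal U$. $\Lambda_{\mathcal D},\mathcal R_{\mathcal D}$ are the contravariant 2-tensors on $\mathcal U$ with $\Lambda_{\mathcal D}(de_a,de_b)=e_{[[a,b]]}$, $\mathcal R_{\mathcal D}(de_a,de_b)=e_{a\odot b}-e_ae_b$, and all pairings of $df_{\mathbb I}$ with $de_a$ or $df_{\mathbb I}$ equal to $0$; $X_f(g)=\Lambda_{\mathcal D}(df,dg)$, $Y_f(g)=\mathcal R_{\mathcal D}(df,dg)$. *)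

(* Defs.v *)
From Stdlib Require Import Reals List.
Import ListNotations.
Open Scope R_scope.

Record C : Type := mkC { Re : R ; Im : R }.
Definition C0 : C := mkC 0 0.
Definition C1 : C := mkC 1 0.
Definition RtoC (r : R) : C := mkC r 0.
Definition Cadd (x y : C) : C := mkC (Re x + Re y) (Im x + Im y).
Definition Copp (x : C) : C := mkC (- Re x) (- Im x).
Definition Cmul (x y : C) : C :=
  mkC (Re x * Re y - Im x * Im y) (Re x * Im y + Im x * Re y).
Definition Cconj (x : C) : C := mkC (Re x) (- Im x).

(** * Operators on H = C^n, as matrices (only entries with indices < n matter) *)
Definition Mat := nat -> nat -> C.
Definition sumC (l : list nat) (f : nat -> C) : C :=
  fold_right (fun i acc => Cadd (f i) acc) C0 l.
Definition madd (A B : Mat) : Mat := fun i j => Cadd (A i j) (B i j).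
Definition msub (A B : Mat) : Mat := fun i j => Cadd (A i j) (Copp (B i j)).
Definition mscal (z : C) (A : Mat) : Mat := fun i j => Cmul z (A i j).
Definition mmul (n : nat) (A B : Mat) : Mat :=
  fun i j => sumC (seq 0 n) (fun k => Cmul (A i k) (B k j)).
Definition mone : Mat := fun i j => if Nat.eqb i j then C1 else C0.
Definition tr (n : nat) (A : Mat) : C := sumC (seq 0 n) (fun i => A i i).
Definition meq (n : nat) (A B : Mat) : Prop :=
  forall i j, (i < n)%nat -> (j < n)%nat -> A i j = B i j.

Definition Hermitian (n : nat) (A : Mat) : Prop :=
  forall i j, (i < n)%nat -> (j < n)%nat -> A j i = Cconj (A i j).

Definition bracket (n : nat) (a b : Mat) : Mat :=
  mscal (mkC 0 (- (1/2))) (msub (mmul n a b) (mmul n b a)).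
Definition jordan (n : nat) (a b : Mat) : Mat :=
  mscal (RtoC (1/2)) (madd (mmul n a b) (mmul n b a)).

(** O-dual identified with O via xi(a) = tr(xi~ a): a point of O-dual is a Hermitian
    matrix rho.  f_a(rho) = rho(a), U = {f_I <> 0}, e_a = f_a / f_I. *)
Definition f_ (n : nat) (a : Mat) (rho : Mat) : R := Re (tr n (mmul n rho a)).
Definition inU (n : nat) (rho : Mat) : Prop := f_ n mone rho <> 0.
Definition e_ (n : nat) (a : Mat) (rho : Mat) : R := f_ n a rho / f_ n mone rho.

Definition PSD (n : nat) (A : Mat) : Prop :=
  forall x : nat -> C,
    0 <= Re (sumC (seq 0 n) (fun i => sumC (seq 0 n)
                 (fun j => Cmul (Cconj (x i)) (Cmul (A i j) (x j))))).

Definition lin_indep_cols (n : nat) (A : Mat) (cols : list nat) : Prop :=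
  forall c : nat -> C,
    (forall i, (i < n)%nat -> sumC cols (fun j => Cmul (c j) (A i j)) = C0) ->
    forall j, In j cols -> c j = C0.
Definition valid_cols (n k : nat) (cols : list nat) : Prop :=
  NoDup cols /\ length cols = k /\ (forall j, In j cols -> (j < n)%nat).
Definition rank_eq (n : nat) (A : Mat) (k : nat) : Prop :=
  (exists cols, valid_cols n k cols /\ lin_indep_cols n A cols) /\
  (forall cols, valid_cols n (S k) cols -> ~ lin_indep_cols n A cols).

Definition density_rank (n k : nat) (rho : Mat) : Prop :=
  Hermitian n rho /\ PSD n rho /\ tr n rho = C1 /\ rank_eq n rho k.

(** Differentials: a cotangent vector at rho in O-dual is identified with a
    Hermitian c in O (the bidual of O), acting on tangent vectors eta by Re tr(c eta).
    [IsDiff n g rho c] : c is the differential of g : O-dual -> R at rho. *)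
Definition IsDiff (n : nat) (g : Mat -> R) (rho c : Mat) : Prop :=
  forall eta, Hermitian n eta ->
    derivable_pt_lim (fun t => g (madd rho (mscal (RtoC t) eta))) 0
                     (Re (tr n (mmul n c eta))).

(** Contravariant 2-tensor field: at each point, a map on pairs of covectors. *)
Definition Tensor2 := Mat -> Mat -> Mat -> R.

Definition bilinear_on_U (n : nat) (T : Tensor2) : Prop :=
  forall rho, Hermitian n rho -> inU n rho ->
  forall x y z r, Hermitian n x -> Hermitian n y -> Hermitian n z ->
    T rho (madd x (mscal (RtoC r) y)) z = T rho x z + r * T rho y z /\
    T rho z (madd x (mscal (RtoC r) y)) = T rho z x + r * T rho z y.

Definition tensor_on_U_with (n : nat) (T : Tensor2)
    (F : Mat -> Mat -> Mat -> R) : Prop :=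
  bilinear_on_U n T /\
  forall rho, Hermitian n rho -> inU n rho ->
  forall a b ca cb cI,
    Hermitian n a -> Hermitian n b ->
    Hermitian n ca -> Hermitian n cb -> Hermitian n cI ->
    IsDiff n (e_ n a) rho ca -> IsDiff n (e_ n b) rho cb ->
    IsDiff n (f_ n mone) rho cI ->
    T rho ca cb = F a b rho /\
    T rho cI cb = 0 /\ T rho ca cI = 0 /\ T rho cI cI = 0.

Definition is_Lambda_D (n : nat) (T : Tensor2) : Prop :=
  tensor_on_U_with n T (fun a b rho => e_ n (bracket n a b) rho).

Definition is_R_D (n : nat) (T : Tensor2) : Prop :=
  tensor_on_U_with n T
    (fun a b rho => e_ n (jordan n a b) rho - e_ n a rho * e_ n b rho).

(** The tangent vector (Hermitian v, acting on g by dg(v) = Re tr(dg v))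
    equals the value at rho of the vector field g |-> T(df, dg), where
    cf = df at rho. *)
Definition represents_field (n : nat) (T : Tensor2) (rho cf v : Mat) : Prop :=
  forall g cg, Hermitian n cg -> IsDiff n g rho cg ->
    T rho cf cg = Re (tr n (mmul n cg v)).

Definition TangentTo (n : nat) (S : Mat -> Prop) (rho v : Mat) : Prop :=
  exists eps, 0 < eps /\
  exists gamma : R -> Mat,
    meq n (gamma 0) rho /\
    (forall t, Rabs t < eps -> S (gamma t)) /\
    (forall i j, (i < n)%nat -> (j < n)%nat ->
       derivable_pt_lim (fun t => Re (gamma t i j)) 0 (Re (v i j)) /\
       derivable_pt_lim (fun t => Im (gamma t i j)) 0 (Im (v i j))).

(* Main.v *)
Require Import Defs.
From Stdlib Require Import Reals List Lra Lia Psatz Ring Field.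
From Stdlib Require Import Classical FunctionalExtensionality ClassicalEpsilon.
Import ListNotations.
Require Import Defs.
Open Scope R_scope.

Lemma Ceq (x y : C) : Re x = Re y -> Im x = Im y -> x = y.
Proof. destruct x, y; simpl; intros; subst; reflexivity. Qed.

Definition Csub x y := Cadd x (Copp y).
Lemma Cring_theory : ring_theory C0 C1 Cadd Cmul Csub Copp (@eq C).
Proof. constructor; intros; apply Ceq; simpl; ring. Qed.
Add Ring Cring : Cring_theory.

Definition Cinv (x : C) : C :=
  mkC (Re x / (Re x * Re x + Im x * Im x)) (- Im x / (Re x * Re x + Im x * Im x)).
Definition Cdiv x y := Cmul x (Cinv y).

Lemma Cnorm_pos x : x <> C0 -> Re x * Re x + Im x * Im x <> 0.
Proof.
  intros H E. apply H. destruct x as [a b]; simpl in *.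
  assert (a = 0) by nra. assert (b = 0) by nra. subst. reflexivity.
Qed.

Lemma Cfield_theory : field_theory C0 C1 Cadd Cmul Csub Copp Cdiv Cinv (@eq C).
Proof.
  constructor.
  - exact Cring_theory.
  - intro H. injection H. lra.
  - reflexivity.
  - intros x Hx. apply Cnorm_pos in Hx. apply Ceq; simpl; field; auto.
Qed.
Add Field Cfield : Cfield_theory.

Lemma RtoC_mul a b : RtoC (a * b) = Cmul (RtoC a) (RtoC b).
Proof. apply Ceq; simpl; ring. Qed.
Lemma RtoC_add a b : RtoC (a + b) = Cadd (RtoC a) (RtoC b).
Proof. apply Ceq; simpl; ring. Qed.

Lemma sumC_nil f : sumC [] f = C0. Proof. reflexivity. Qed.
Lemma sumC_cons a l f : sumC (a :: l) f = Cadd (f a) (sumC l f). Proof. reflexivity. Qed.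

Lemma sumC_ext l f g : (forall i, In i l -> f i = g i) -> sumC l f = sumC l g.
Proof.
  induction l; intros H; auto.
  rewrite !sumC_cons. rewrite H by (left; auto). f_equal. apply IHl. intros; apply H; right; auto.
Qed.

Lemma sumC_add l f g : sumC l (fun i => Cadd (f i) (g i)) = Cadd (sumC l f) (sumC l g).
Proof. induction l. apply Ceq; simpl; ring. rewrite !sumC_cons, IHl. ring. Qed.

Lemma sumC_mull l z f : sumC l (fun i => Cmul z (f i)) = Cmul z (sumC l f).
Proof. induction l. apply Ceq; simpl; ring. rewrite !sumC_cons, IHl. ring. Qed.

Lemma sumC_mulr l z f : sumC l (fun i => Cmul (f i) z) = Cmul (sumC l f) z.
Proof. induction l. apply Ceq; simpl; ring. rewrite !sumC_cons, IHl. ring. Qed.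

Lemma sumC_opp l f : sumC l (fun i => Copp (f i)) = Copp (sumC l f).
Proof. induction l. apply Ceq; simpl; ring. rewrite !sumC_cons, IHl. ring. Qed.

Lemma sumC_zero l f : (forall i, In i l -> f i = C0) -> sumC l f = C0.
Proof.
  intros H. rewrite (sumC_ext l f (fun i => Cmul C0 (f i))).
  rewrite sumC_mull. ring. intros. rewrite H; auto. ring.
Qed.

Lemma sumC_app l1 l2 f : sumC (l1 ++ l2) f = Cadd (sumC l1 f) (sumC l2 f).
Proof. induction l1. simpl. apply Ceq; simpl; ring. rewrite <- app_comm_cons, !sumC_cons, IHl1. ring. Qed.

Lemma sumC_swap l1 l2 (f : nat -> nat -> C) :
  sumC l1 (fun i => sumC l2 (fun j => f i j)) = sumC l2 (fun j => sumC l1 (fun i => f i j)).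
Proof.
  induction l1.
  - symmetry; apply sumC_zero; auto.
  - rewrite sumC_cons, IHl1. rewrite <- sumC_add. apply sumC_ext. intros; reflexivity.
Qed.

Lemma conj_sumC l f : Cconj (sumC l f) = sumC l (fun i => Cconj (f i)).
Proof. induction l. apply Ceq; simpl; ring. rewrite !sumC_cons, <- IHl. apply Ceq; simpl; ring. Qed.

Lemma Re_sumC_cons a l f : Re (sumC (a::l) f) = Re (f a) + Re (sumC l f).
Proof. reflexivity. Qed.

Lemma sumC_kron_gen i s len g :
  sumC (seq s len) (fun k => if Nat.eqb i k then g k else C0) =
  if andb (Nat.leb s i) (Nat.ltb i (s + len)) then g i else C0.
Proof.
  revert s. induction len; intros s; cbn [seq].
  - destruct (Nat.leb s i) eqn:E1; destruct (Nat.ltb i (s+0)) eqn:E2; simpl; auto.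
    apply Nat.leb_le in E1. apply Nat.ltb_lt in E2. lia.
  - rewrite sumC_cons, IHlen. destruct (Nat.eqb_spec i s).
    + subst. replace (Nat.leb (S s) s) with false by (symmetry; apply Nat.leb_gt; lia).
      replace (Nat.leb s s) with true by (symmetry; apply Nat.leb_le; lia).
      replace (Nat.ltb s (s + S len)) with true by (symmetry; apply Nat.ltb_lt; lia).
      simpl. apply Ceq; simpl; ring.
    + destruct (Nat.leb (S s) i) eqn:E1; destruct (Nat.ltb i (S s + len)) eqn:E2;
      destruct (Nat.leb s i) eqn:E3; destruct (Nat.ltb i (s + S len)) eqn:E4; simpl;
      try (apply Nat.leb_le in E1 || apply Nat.leb_gt in E1);
      try (apply Nat.ltb_lt in E2 || apply Nat.ltb_ge in E2);
      try (apply Nat.leb_le in E3 || apply Nat.leb_gt in E3);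
      try (apply Nat.ltb_lt in E4 || apply Nat.ltb_ge in E4);
      try lia; apply Ceq; simpl; ring.
Qed.

Lemma sumC_kron n i g : (i < n)%nat ->
  sumC (seq 0 n) (fun k => if Nat.eqb i k then g k else C0) = g i.
Proof.
  intros H. rewrite sumC_kron_gen.
  replace (Nat.leb 0 i) with true by (symmetry; apply Nat.leb_le; lia).
  replace (Nat.ltb i (0 + n)) with true by (symmetry; apply Nat.ltb_lt; lia). reflexivity.
Qed.
Definition ctr (A : Mat) : Mat := fun i j => Cconj (A j i).
Definition appv (n : nat) (A : Mat) (v : nat -> C) : nat -> C :=
  fun i => sumC (seq 0 n) (fun j => Cmul (A i j) (v j)).
Definition dot (n : nat) (u v : nat -> C) : C :=
  sumC (seq 0 n) (fun i => Cmul (Cconj (u i)) (v i)).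

Ltac fext := let i := fresh "i" in let j := fresh "j" in
  apply functional_extensionality; intro i; apply functional_extensionality; intro j.

Lemma mmul_assoc n X Y Z : mmul n (mmul n X Y) Z = mmul n X (mmul n Y Z).
Proof.
  fext. unfold mmul.
  transitivity (sumC (seq 0 n) (fun l => sumC (seq 0 n) (fun k => Cmul (X i k) (Cmul (Y k l) (Z l j))))).
  - apply sumC_ext; intros l _. rewrite <- sumC_mulr. apply sumC_ext; intros; ring.
  - rewrite sumC_swap. apply sumC_ext; intros k _. rewrite <- sumC_mull. reflexivity.
Qed.

Lemma mmul_madd_l n X Y Z : mmul n (madd X Y) Z = madd (mmul n X Z) (mmul n Y Z).
Proof. fext. unfold mmul, madd. rewrite <- sumC_add. apply sumC_ext; intros; ring. Qed.
Lemma mmul_madd_r n X Y Z : mmul n X (madd Y Z) = madd (mmul n X Y) (mmul n X Z).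
Proof. fext. unfold mmul, madd. rewrite <- sumC_add. apply sumC_ext; intros; ring. Qed.
Lemma mmul_msub_l n X Y Z : mmul n (msub X Y) Z = msub (mmul n X Z) (mmul n Y Z).
Proof. fext. unfold mmul, msub. rewrite <- sumC_opp, <- sumC_add. apply sumC_ext; intros; ring. Qed.
Lemma mmul_msub_r n X Y Z : mmul n X (msub Y Z) = msub (mmul n X Y) (mmul n X Z).
Proof. fext. unfold mmul, msub. rewrite <- sumC_opp, <- sumC_add. apply sumC_ext; intros; ring. Qed.
Lemma mmul_mscal_l n z X Y : mmul n (mscal z X) Y = mscal z (mmul n X Y).
Proof. fext. unfold mmul, mscal. rewrite <- sumC_mull. apply sumC_ext; intros; ring. Qed.
Lemma mmul_mscal_r n z X Y : mmul n X (mscal z Y) = mscal z (mmul n X Y).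
Proof. fext. unfold mmul, mscal. rewrite <- sumC_mull. apply sumC_ext; intros; ring. Qed.

Lemma mmul_one_l n X i j : (i < n)%nat -> mmul n mone X i j = X i j.
Proof.
  intros H. unfold mmul, mone.
  rewrite (sumC_ext _ _ (fun k => if Nat.eqb i k then X k j else C0)).
  apply (sumC_kron n i (fun k => X k j)); auto.
  intros k _. destruct (Nat.eqb i k); unfold C1, C0; apply Ceq; simpl; ring.
Qed.
Lemma mmul_one_r n X i j : (j < n)%nat -> mmul n X mone i j = X i j.
Proof.
  intros H. unfold mmul, mone.
  rewrite (sumC_ext _ _ (fun k => if Nat.eqb j k then X i k else C0)).
  apply (sumC_kron n j (fun k => X i k)); auto.
  intros k _. destruct (Nat.eqb_spec k j); destruct (Nat.eqb_spec j k); subst; try (exfalso; congruence);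
  unfold C1, C0; apply Ceq; simpl; ring.
Qed.

Lemma conj_mul x y : Cconj (Cmul x y) = Cmul (Cconj x) (Cconj y).
Proof. apply Ceq; simpl; ring. Qed.
Lemma conj_add x y : Cconj (Cadd x y) = Cadd (Cconj x) (Cconj y).
Proof. apply Ceq; simpl; ring. Qed.
Lemma conj_conj x : Cconj (Cconj x) = x.
Proof. apply Ceq; simpl; ring. Qed.
Lemma conj_RtoC r : Cconj (RtoC r) = RtoC r.
Proof. apply Ceq; simpl; ring. Qed.

Lemma ctr_mmul n A B : ctr (mmul n A B) = mmul n (ctr B) (ctr A).
Proof. fext. unfold ctr, mmul. rewrite conj_sumC. apply sumC_ext; intros. rewrite conj_mul. ring. Qed.
Lemma ctr_ctr A : ctr (ctr A) = A.
Proof. fext. unfold ctr. apply conj_conj. Qed.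
Lemma ctr_madd A B : ctr (madd A B) = madd (ctr A) (ctr B).
Proof. fext. unfold ctr, madd. apply conj_add. Qed.
Lemma ctr_mscal_R r A : ctr (mscal (RtoC r) A) = mscal (RtoC r) (ctr A).
Proof. fext. unfold ctr, mscal. rewrite conj_mul, conj_RtoC. reflexivity. Qed.
Lemma ctr_mone : ctr mone = mone.
Proof. fext. unfold ctr, mone. destruct (Nat.eqb_spec j i); destruct (Nat.eqb_spec i j); subst; try (exfalso; congruence);
  apply Ceq; simpl; ring. Qed.

Lemma herm_ctr n A : Hermitian n A -> meq n (ctr A) A.
Proof. intros H i j Hi Hj. unfold ctr. rewrite H by auto. apply conj_conj. Qed.
Lemma ctr_herm n A : meq n (ctr A) A -> Hermitian n A.
Proof. intros H i j Hi Hj. rewrite <- (H j i) by auto. unfold ctr. reflexivity. Qed.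

Lemma mmul_meq_l n A A' B : meq n A A' -> meq n (mmul n A B) (mmul n A' B).
Proof. intros H i j Hi Hj. unfold mmul. apply sumC_ext. intros k Hk. apply in_seq in Hk. rewrite H by lia. auto. Qed.
Lemma mmul_meq_r n A B B' : meq n B B' -> meq n (mmul n A B) (mmul n A B').
Proof. intros H i j Hi Hj. unfold mmul. apply sumC_ext. intros k Hk. apply in_seq in Hk. rewrite H by lia. auto. Qed.
Lemma meq_trans n A B D : meq n A B -> meq n B D -> meq n A D.
Proof. intros H1 H2 i j Hi Hj. rewrite H1 by auto. auto. Qed.
Lemma meq_sym n A B : meq n A B -> meq n B A.
Proof. intros H i j Hi Hj. symmetry; auto. Qed.
Lemma meq_refl n A : meq n A A.
Proof. intros i j _ _. reflexivity. Qed.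

Lemma tr_meq n A B : meq n A B -> tr n A = tr n B.
Proof. intros H. unfold tr. apply sumC_ext. intros k Hk. apply in_seq in Hk. apply H; lia. Qed.
Lemma tr_madd n A B : tr n (madd A B) = Cadd (tr n A) (tr n B).
Proof. unfold tr, madd. apply sumC_add. Qed.
Lemma tr_msub n A B : tr n (msub A B) = Csub (tr n A) (tr n B).
Proof. unfold tr, msub, Csub. rewrite sumC_add, sumC_opp. reflexivity. Qed.
Lemma tr_mscal n z A : tr n (mscal z A) = Cmul z (tr n A).
Proof. unfold tr, mscal. apply sumC_mull. Qed.
Lemma tr_comm n A B : tr n (mmul n A B) = tr n (mmul n B A).
Proof.
  unfold tr, mmul. rewrite sumC_swap. apply sumC_ext; intros; apply sumC_ext; intros; ring.
Qed.
Lemma tr_mone_r n A : tr n (mmul n A mone) = tr n A.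
Proof. apply tr_meq. intros i j Hi Hj. apply mmul_one_r; auto. Qed.
Lemma tr_mone_l n A : tr n (mmul n mone A) = tr n A.
Proof. apply tr_meq. intros i j Hi Hj. apply mmul_one_l; auto. Qed.

Lemma tr_herm_real n A : Hermitian n A -> Im (tr n A) = 0.
Proof.
  intros H. unfold tr.
  assert (E : forall l, (forall k, In k l -> (k < n)%nat) -> Im (sumC l (fun i => A i i)) = 0).
  { induction l; intros Hl. reflexivity. rewrite sumC_cons. simpl.
    rewrite IHl by (intros; apply Hl; right; auto).
    assert (Ha: (a < n)%nat) by (apply Hl; left; auto).
    pose proof (H a a Ha Ha) as E. apply (f_equal Im) in E. simpl in E. lra. }
  apply E. intros k Hk. apply in_seq in Hk. lia.
Qed.

Lemma tr_herm_prod_real n A B : Hermitian n A -> Hermitian n B -> Im (tr n (mmul n A B)) = 0.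
Proof.
  intros HA HB.
  assert (E : Cconj (tr n (mmul n A B)) = tr n (mmul n A B)).
  { unfold tr, mmul. rewrite conj_sumC. rewrite sumC_swap.
    apply sumC_ext; intros i Hi; rewrite conj_sumC; apply sumC_ext; intros j Hj.
    apply in_seq in Hi; apply in_seq in Hj. rewrite conj_mul.
    rewrite <- HA, <- HB by lia. ring. }
  apply (f_equal Im) in E. simpl in E. lra.
Qed.

Lemma herm_mmul_conj n A B i j : Hermitian n A -> Hermitian n B -> (i < n)%nat -> (j < n)%nat ->
  mmul n A B j i = Cconj (mmul n B A i j).
Proof.
  intros HA HB Hi Hj. unfold mmul. rewrite conj_sumC. apply sumC_ext; intros k Hk.
  apply in_seq in Hk. rewrite conj_mul, <- HA, <- HB by lia. ring.
Qed.

Lemma appv_mmul n A B v : appv n (mmul n A B) v = appv n A (appv n B v).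
Proof.
  apply functional_extensionality; intro i. unfold appv, mmul.
  transitivity (sumC (seq 0 n) (fun j => sumC (seq 0 n) (fun k => Cmul (A i k) (Cmul (B k j) (v j))))).
  - apply sumC_ext; intros. rewrite <- sumC_mulr. apply sumC_ext; intros; ring.
  - rewrite sumC_swap. apply sumC_ext; intros. rewrite <- sumC_mull. reflexivity.
Qed.

Lemma dot_adj n u A v : dot n u (appv n A v) = dot n (appv n (ctr A) u) v.
Proof.
  unfold dot, appv, ctr.
  transitivity (sumC (seq 0 n) (fun i => sumC (seq 0 n) (fun j => Cmul (Cconj (u i)) (Cmul (A i j) (v j))))).
  - apply sumC_ext; intros. rewrite sumC_mull. reflexivity.
  - rewrite sumC_swap. apply sumC_ext; intros. rewrite conj_sumC, <- sumC_mulr.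
    apply sumC_ext; intros. rewrite conj_mul, conj_conj. ring.
Qed.
Definition comb (l : list nat) (c : nat -> C) (w : nat -> nat -> C) : nat -> C :=
  fun i => sumC l (fun s => Cmul (c s) (w s i)).
Definition indep (n : nat) (l : list nat) (w : nat -> nat -> C) : Prop :=
  forall c, (forall i, (i < n)%nat -> comb l c w i = C0) -> forall s, In s l -> c s = C0.
Definition in_span (n : nat) (l : list nat) (w : nat -> nat -> C) (u : nat -> C) : Prop :=
  exists d, forall i, (i < n)%nat -> u i = comb l d w i.
Definition cols (A : Mat) : nat -> nat -> C := fun j i => A i j.

Lemma lin_indep_iff n A l : lin_indep_cols n A l <-> indep n l (cols A).
Proof. split; intro H; exact H. Qed.

Lemma fchoice (P : nat -> (nat -> C) -> Prop) : (forall s, exists d, P s d) -> exists D, forall s, P s (D s).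
Proof.
  intros H. exists (fun s => proj1_sig (constructive_indefinite_description _ (H s))).
  intros s. exact (proj2_sig (constructive_indefinite_description _ (H s))).
Qed.

Lemma not_indep n l w : ~ indep n l w ->
  exists c, (forall i, (i < n)%nat -> comb l c w i = C0) /\ exists s, In s l /\ c s <> C0.
Proof.
  intros H. unfold indep in H. apply not_all_ex_not in H. destruct H as [c Hc].
  apply imply_to_and in Hc. destruct Hc as [H0 Hc]. apply not_all_ex_not in Hc.
  destruct Hc as [s Hs]. apply imply_to_and in Hs. exists c; split; auto. exists s; tauto.
Qed.

Lemma Lext n T w j : indep n T w -> ~ indep n (j :: T) w -> in_span n T w (w j).
Proof.
  intros HT Hn. apply not_indep in Hn. destruct Hn as [c [H0 [s [Hs Hcs]]]].
  destruct (classic (c j = C0)) as [Hj | Hj].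
  - exfalso. assert (forall i, (i < n)%nat -> comb T c w i = C0).
    { intros i Hi. specialize (H0 i Hi). unfold comb in *. rewrite sumC_cons, Hj in H0.
      rewrite <- H0. ring. }
    destruct Hs as [Hs | Hs]. subst; auto. apply Hcs. apply (HT c); auto.
  - exists (fun s => Cmul (Copp (Cinv (c j))) (c s)). intros i Hi.
    specialize (H0 i Hi). unfold comb in *. rewrite sumC_cons in H0.
    rewrite (sumC_ext _ _ (fun s => Cmul (Copp (Cinv (c j))) (Cmul (c s) (w s i)))).
    2:{ intros; ring. }
    rewrite sumC_mull.
    assert (E : sumC T (fun s => Cmul (c s) (w s i)) = Copp (Cmul (c j) (w j i))).
    { transitivity (Csub (Cadd (Cmul (c j) (w j i)) (sumC T (fun s => Cmul (c s) (w s i)))) (Cmul (c j) (w j i))). ring.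
      rewrite H0. ring. }
    rewrite E. field. auto.
Qed.

Lemma sum_delta T j f : NoDup T -> In j T ->
  sumC T (fun s => if Nat.eqb s j then f s else C0) = f j.
Proof.
  induction T as [|a T IH]; intros Hnd Hin. destruct Hin.
  inversion Hnd; subst. rewrite sumC_cons. destruct (Nat.eqb_spec a j).
  - subst. rewrite sumC_zero. ring. intros i Hi. destruct (Nat.eqb_spec i j); subst; auto. contradiction.
  - destruct Hin as [Hin|Hin]. congruence. rewrite IH; auto. ring.
Qed.

Lemma span_self n T w j : NoDup T -> In j T -> in_span n T w (w j).
Proof.
  intros Hnd Hin. exists (fun s => if Nat.eqb s j then C1 else C0). intros i Hi.
  unfold comb. rewrite (sumC_ext _ _ (fun s => if Nat.eqb s j then w s i else C0)).
  rewrite sum_delta; auto.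
  intros s _. destruct (Nat.eqb s j); ring.
Qed.

Lemma span_cons n T w u m : ~ In m T -> in_span n T w u -> in_span n (m :: T) w u.
Proof.
  intros Hm [d Hd]. exists (fun s => if Nat.eqb s m then C0 else d s). intros i Hi.
  rewrite Hd by auto. unfold comb. rewrite sumC_cons, Nat.eqb_refl.
  rewrite (sumC_ext T (fun s => Cmul (if Nat.eqb s m then C0 else d s) (w s i)) (fun s => Cmul (d s) (w s i))).
  ring. intros s Hs. destruct (Nat.eqb_spec s m); subst; auto. contradiction.
Qed.

Lemma Lmax n w m : exists T, NoDup T /\ (forall j, In j T -> (j < m)%nat) /\ indep n T w /\
  forall j, (j < m)%nat -> in_span n T w (w j).
Proof.
  induction m.
  - exists []. repeat split. constructor. intros j []. intros c _ s []. intros; lia.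
  - destruct IHm as [T [Hnd [Hlt [Hind Hsp]]]].
    assert (HmT : ~ In m T) by (intro H; specialize (Hlt m H); lia).
    destruct (classic (indep n (m :: T) w)) as [Hi | Hi].
    + exists (m :: T). repeat split.
      * constructor; auto.
      * intros j [Hj|Hj]; subst; [lia | specialize (Hlt j Hj); lia].
      * auto.
      * intros j Hj. destruct (Nat.eq_dec j m). subst. apply span_self. constructor; auto. left; auto.
        apply span_cons; auto. apply Hsp. lia.
    + exists T. repeat split; auto.
      * intros j Hj; specialize (Hlt j Hj); lia.
      * intros j Hj. destruct (Nat.eq_dec j m). subst. apply Lext; auto. apply Hsp. lia.
Qed.

Lemma span_trans n S T v u c : (forall s, In s S -> in_span n T v (u s)) -> in_span n T v (comb S c u).
Proof.
  intros H.
  destruct (fchoice (fun s d => In s S -> forall i, (i < n)%nat -> u s i = comb T d v i)) as [D HD].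
  { intros s. destruct (classic (In s S)) as [Hs|Hs]. destruct (H s Hs) as [d Hd]. exists d; auto.
    exists (fun _ => C0). intros; contradiction. }
  exists (fun l => sumC S (fun s => Cmul (c s) (D s l))). intros i Hi. unfold comb.
  rewrite (sumC_ext S _ (fun s => sumC T (fun l => Cmul (c s) (Cmul (D s l) (v l i))))).
  - rewrite sumC_swap. apply sumC_ext; intros l _. rewrite <- sumC_mulr. apply sumC_ext; intros; ring.
  - intros s Hs. rewrite (HD s Hs i Hi). unfold comb. rewrite sumC_mull. reflexivity.
Qed.

Lemma L1 n : forall T v S w, NoDup S -> (forall s, In s S -> in_span n T v (w s)) ->
  (length T < length S)%nat -> ~ indep n S w.
Proof.
  induction T as [|l0 T IH]; intros v S w Hnd Hsp Hlen Hind.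
  - destruct S as [|s0 S]. simpl in Hlen; lia.
    assert (Hz : forall s, In s (s0 :: S) -> forall i, (i < n)%nat -> w s i = C0).
    { intros s Hs i Hi. destruct (Hsp s Hs) as [d Hd]. rewrite Hd by auto. reflexivity. }
    assert (C1 = C0).
    { apply (Hind (fun s => C1)) with (s := s0). intros i Hi. unfold comb. apply sumC_zero. intros s Hs.
      rewrite Hz; auto. ring. left; auto. }
    injection H; lra.
  - destruct (fchoice (fun s d => In s S -> forall i, (i < n)%nat -> w s i = comb (l0 :: T) d v i)) as [D HD].
    { intros s. destruct (classic (In s S)) as [Hs|Hs]. destruct (Hsp s Hs) as [d Hd]. exists d; auto.
      exists (fun _ => C0). intros; contradiction. }
    destruct (classic (exists s0, In s0 S /\ D s0 l0 <> C0)) as [[s0 [Hs0 Hd0]] | Hno].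
    + apply in_split in Hs0. destruct Hs0 as [l1 [l2 ES]]. subst S.
      set (S' := l1 ++ l2).
      set (r := fun s => Cdiv (D s l0) (D s0 l0)).
      set (w' := fun s i => Csub (w s i) (Cmul (r s) (w s0 i))).
      assert (HndS' : NoDup S') by (apply NoDup_remove_1 in Hnd; auto).
      assert (Hs0S' : ~ In s0 S') by (apply NoDup_remove_2 in Hnd; auto).
      assert (HinS : forall s, In s S' -> In s (l1 ++ s0 :: l2)).
      { intros s Hs. unfold S' in Hs. apply in_app_or in Hs. apply in_or_app. destruct Hs; auto. right; right; auto. }
      apply (IH v S' w'); auto.
      * intros s Hs. exists (fun l => Csub (D s l) (Cmul (r s) (D s0 l))). intros i Hi.
        unfold w'. rewrite (HD s (HinS s Hs) i Hi), (HD s0 (in_elt _ _ _) i Hi).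
        unfold comb. rewrite !sumC_cons.
        rewrite (sumC_ext T (fun s1 => Cmul (Csub (D s s1) (Cmul (r s) (D s0 s1))) (v s1 i))
                  (fun s1 => Cadd (Cmul (D s s1) (v s1 i)) (Cmul (Copp (r s)) (Cmul (D s0 s1) (v s1 i))))).
        2:{ intros; unfold Csub; ring. }
        rewrite sumC_add, sumC_mull. unfold r. field. auto.
      * unfold S'. rewrite length_app in *. simpl in *. lia.
      * intros c Hc.
        set (c0 := Copp (sumC S' (fun s => Cmul (c s) (r s)))).
        set (cc := fun s => if Nat.eqb s s0 then c0 else c s).
        assert (Hcc : forall s, In s S' -> cc s = c s).
        { intros s Hs. unfold cc. destruct (Nat.eqb_spec s s0); subst; auto. contradiction. }
        intros s Hs. rewrite <- (Hcc s Hs). apply (Hind cc); auto.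
        intros i Hi. specialize (Hc i Hi). unfold comb in *.
        assert (Hperm : forall f, sumC (l1 ++ s0 :: l2) f = Cadd (f s0) (sumC S' f)).
        { intros f. unfold S'. rewrite !sumC_app, sumC_cons. ring. }
        rewrite Hperm. unfold cc at 1. rewrite Nat.eqb_refl.
        rewrite (sumC_ext S' _ (fun s => Cmul (c s) (w s i))).
        2:{ intros s1 Hs1. rewrite Hcc; auto. }
        unfold w' in Hc.
        rewrite (sumC_ext S' _ (fun s => Cadd (Cmul (c s) (w s i)) (Cmul (Copp (w s0 i)) (Cmul (c s) (r s))))) in Hc.
        2:{ intros; unfold Csub; ring. }
        rewrite sumC_add, sumC_mull in Hc. unfold c0. rewrite <- Hc. ring.
    + apply (IH v S w); auto.
      * intros s Hs. exists (D s). intros i Hi. rewrite (HD s Hs i Hi). unfold comb. rewrite sumC_cons.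
        assert (D s l0 = C0). { apply NNPP; intro; apply Hno; eauto. }
        rewrite H. ring.
      * simpl in Hlen; lia.
Qed.

Lemma nodup_disj (l1 l2 : list nat) x : NoDup (l1 ++ l2) -> In x l1 -> In x l2 -> False.
Proof.
  induction l1; intros H H1 H2. destruct H1. inversion H; subst. destruct H1 as [H1|H1].
  subst. apply H4. apply in_or_app; auto. eauto.
Qed.

Lemma indep_firstn n T w k : NoDup T -> indep n T w -> indep n (firstn k T) w.
Proof.
  intros Hnd Hi c Hc s Hs.
  set (c' := fun s => if in_dec Nat.eq_dec s (firstn k T) then c s else C0).
  assert (c' s = C0).
  { apply (Hi c'). 2:{ rewrite <- (firstn_skipn k T). apply in_or_app; auto. }
    intros i Hin. unfold comb.
    assert (E : forall f, sumC T f = Cadd (sumC (firstn k T) f) (sumC (skipn k T) f))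
      by (intros f; rewrite <- sumC_app, firstn_skipn; reflexivity).
    rewrite E.
    rewrite (sumC_zero (skipn k T)).
    - pose proof (Hc i Hin) as Hci. unfold comb in Hci.
      rewrite (sumC_ext _ _ (fun s => Cmul (c s) (w s i))). rewrite Hci. ring.
      intros s1 Hs1. unfold c'. destruct (in_dec Nat.eq_dec s1 (firstn k T)); auto; contradiction.
    - intros s1 Hs1. unfold c'. destruct (in_dec Nat.eq_dec s1 (firstn k T)).
      exfalso. rewrite <- (firstn_skipn k T) in Hnd. eapply nodup_disj; eauto. ring. }
  unfold c' in H. destruct (in_dec Nat.eq_dec s (firstn k T)); auto; contradiction.
Qed.
Definition nrm (z : C) : R := Rabs (Re z) + Rabs (Im z).
Definition Rsum (l : list nat) (g : nat -> R) : R := fold_right (fun i acc => g i + acc) 0 l.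

Lemma nrm_nonneg z : 0 <= nrm z.
Proof. unfold nrm. pose proof (Rabs_pos (Re z)); pose proof (Rabs_pos (Im z)); lra. Qed.
Lemma nrm_mul x y : nrm (Cmul x y) <= nrm x * nrm y.
Proof.
  unfold nrm; destruct x as [a b], y as [c d]; simpl.
  pose proof (Rabs_triang (a*c) (- (b*d))). pose proof (Rabs_triang (a*d) (b*c)).
  rewrite Rabs_Ropp in H. rewrite !Rabs_mult in *.
  pose proof (Rabs_pos a); pose proof (Rabs_pos b); pose proof (Rabs_pos c); pose proof (Rabs_pos d).
  unfold Rminus. nra.
Qed.
Lemma nrm_add x y : nrm (Cadd x y) <= nrm x + nrm y.
Proof.
  unfold nrm; destruct x as [a b], y as [c d]; simpl.
  pose proof (Rabs_triang a c). pose proof (Rabs_triang b d). lra.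
Qed.
Lemma nrm_sum l f : nrm (sumC l f) <= Rsum l (fun i => nrm (f i)).
Proof.
  induction l. unfold nrm; simpl; rewrite Rabs_R0; lra.
  rewrite sumC_cons. simpl. pose proof (nrm_add (f a) (sumC l f)). lra.
Qed.
Lemma Rabs_eq_0 x : Rabs x = 0 -> x = 0.
Proof. intros H. destruct (Req_dec x 0); auto. apply Rabs_no_R0 in H0. contradiction. Qed.
Lemma nrm_zero z : nrm z = 0 -> z = C0.
Proof.
  unfold nrm; intros H. pose proof (Rabs_pos (Re z)); pose proof (Rabs_pos (Im z)).
  apply Ceq; simpl. apply Rabs_eq_0; lra. apply Rabs_eq_0; lra.
Qed.
Lemma nrm_scal t z : nrm (Cmul (RtoC t) z) = Rabs t * nrm z.
Proof. unfold nrm; simpl. replace (t * Re z - 0 * Im z) with (t * Re z) by ring.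
  replace (t * Im z + 0 * Re z) with (t * Im z) by ring. rewrite !Rabs_mult. ring. Qed.

Lemma Rsum_le l g h : (forall i, In i l -> g i <= h i) -> Rsum l g <= Rsum l h.
Proof. induction l; simpl; intros H. lra. pose proof (H a (or_introl eq_refl)).
  pose proof (IHl (fun i Hi => H i (or_intror Hi))). lra. Qed.
Lemma Rsum_nonneg l g : (forall i, In i l -> 0 <= g i) -> 0 <= Rsum l g.
Proof. induction l; simpl; intros H. lra. pose proof (H a (or_introl eq_refl)).
  pose proof (IHl (fun i Hi => H i (or_intror Hi))). lra. Qed.
Lemma Rsum_elt l g i : (forall j, In j l -> 0 <= g j) -> In i l -> g i <= Rsum l g.
Proof. induction l; simpl; intros H Hi. destruct Hi.
  pose proof (Rsum_nonneg l g (fun j Hj => H j (or_intror Hj))).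
  destruct Hi as [Hi|Hi]. subst. lra. pose proof (IHl (fun j Hj => H j (or_intror Hj)) Hi).
  pose proof (H a (or_introl eq_refl)). lra. Qed.
Lemma Rsum_scal l c g : Rsum l (fun i => c * g i) = c * Rsum l g.
Proof. induction l; simpl. ring. rewrite IHl. ring. Qed.
Lemma Rsum_const l c : Rsum l (fun _ => c) = INR (length l) * c.
Proof. induction l; simpl length. simpl; ring. rewrite S_INR. simpl. rewrite IHl. ring. Qed.

Lemma appv_IB n t B v i : (i < n)%nat ->
  appv n (madd mone (mscal (RtoC t) B)) v i = Cadd (v i) (Cmul (RtoC t) (appv n B v i)).
Proof.
  intros Hi. unfold appv, madd, mscal.
  rewrite (sumC_ext _ _ (fun j => Cadd (if Nat.eqb i j then v j else C0) (Cmul (RtoC t) (Cmul (B i j) (v j))))).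
  - rewrite sumC_add, sumC_mull, (sumC_kron n i v); auto.
  - intros j _. unfold mone. destruct (Nat.eqb i j); apply Ceq; simpl; ring.
Qed.

Lemma inj_small n B : exists d, 0 < d /\ forall t, Rabs t < d -> forall v,
  (forall i, (i < n)%nat -> appv n (madd mone (mscal (RtoC t) B)) v i = C0) ->
  forall i, (i < n)%nat -> v i = C0.
Proof.
  set (K := Rsum (seq 0 n) (fun i => Rsum (seq 0 n) (fun j => nrm (B i j)))).
  assert (HK : 0 <= K) by (apply Rsum_nonneg; intros; apply Rsum_nonneg; intros; apply nrm_nonneg).
  assert (Hn : 0 <= INR n) by apply pos_INR.
  exists (/ (INR n * K + 1)). split. apply Rinv_0_lt_compat; nra.
  intros t Ht v Hv.
  set (W := Rsum (seq 0 n) (fun i => nrm (v i))).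
  assert (HW0 : 0 <= W) by (apply Rsum_nonneg; intros; apply nrm_nonneg).
  assert (Hbi : forall i, (i < n)%nat -> nrm (v i) <= Rabs t * (K * W)).
  { intros i Hi. specialize (Hv i Hi). rewrite appv_IB in Hv by auto.
    assert (E : v i = Cmul (RtoC (- t)) (appv n B v i)).
    { transitivity (Csub (Cadd (v i) (Cmul (RtoC t) (appv n B v i))) (Cmul (RtoC t) (appv n B v i))). ring.
      rewrite Hv. apply Ceq; simpl; ring. }
    rewrite E, nrm_scal, Rabs_Ropp. apply Rmult_le_compat_l. apply Rabs_pos.
    unfold appv. eapply Rle_trans. apply nrm_sum.
    eapply Rle_trans. apply Rsum_le. intros j _. apply nrm_mul.
    unfold W. rewrite <- Rsum_scal. apply Rsum_le. intros j Hj. apply Rmult_le_compat_r. apply nrm_nonneg.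
    unfold K. eapply Rle_trans.
    2:{ apply (Rsum_elt _ (fun i => Rsum (seq 0 n) (fun j => nrm (B i j))) i).
        intros; apply Rsum_nonneg; intros; apply nrm_nonneg. apply in_seq; lia. }
    apply (Rsum_elt _ (fun j => nrm (B i j))). intros; apply nrm_nonneg. auto. }
  assert (HWle : W <= INR n * (Rabs t * (K * W))).
  { unfold W at 1. eapply Rle_trans. apply Rsum_le. intros i Hi. apply in_seq in Hi. apply (Hbi i). lia.
    rewrite Rsum_const, length_seq. lra. }
  assert (Hts : Rabs t * (INR n * K + 1) < 1).
  { assert (0 < INR n * K + 1) by nra.
    apply (Rmult_lt_compat_r (INR n * K + 1)) in Ht; auto. rewrite Rinv_l in Ht; lra. }
  assert (W = 0).
  { pose proof (Rabs_pos t). assert (Rabs t * (INR n * K) < 1).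
    { assert (Rabs t * (INR n * K + 1) = Rabs t * (INR n * K) + Rabs t) by ring. lra. }
    assert (0 <= Rabs t * (INR n * K)) by (apply Rmult_le_pos; nra).
    assert (HA : W * (1 - Rabs t * (INR n * K)) <= 0).
    { replace (W * (1 - Rabs t * (INR n * K))) with (W - INR n * (Rabs t * (K * W))) by ring. lra. }
    set (a := Rabs t * (INR n * K)) in *.
    assert (W <= 0). { destruct (Rle_dec W 0); auto. assert (0 < W * (1 - a)) by (apply Rmult_lt_0_compat; lra). lra. }
    lra. }
  intros i Hi. apply nrm_zero. apply Rle_antisym. 2: apply nrm_nonneg.
  rewrite <- H. unfold W. apply (Rsum_elt _ (fun i => nrm (v i))). intros; apply nrm_nonneg. apply in_seq; lia.
Qed.

Lemma span_basis n u : in_span n (seq 0 n) (fun l i => mone i l) u.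
Proof.
  exists u. intros i Hi. unfold comb. symmetry.
  rewrite (sumC_ext _ _ (fun k => if Nat.eqb i k then u k else C0)). apply (sumC_kron n i u); auto.
  intros k _. unfold mone. destruct (Nat.eqb i k); apply Ceq; simpl; ring.
Qed.

Lemma rinv n A : (forall v, (forall i, (i < n)%nat -> appv n A v i = C0) -> forall i, (i < n)%nat -> v i = C0) ->
  exists N, meq n (mmul n A N) mone.
Proof.
  intros Hinj.
  destruct (fchoice (fun j x => (j < n)%nat -> forall i, (i < n)%nat -> appv n A x i = mone i j)) as [X HX].
  - intros j. destruct (classic (j < n)%nat) as [Hj|Hj]. 2:{ exists (fun _ => C0). intros; contradiction. }
    set (w := fun s => if Nat.ltb s n then cols A s else (fun i => mone i j)).
    assert (Hni : ~ indep n (seq 0 (S n)) w).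
    { apply (L1 n (seq 0 n) (fun l i => mone i l)). apply seq_NoDup.
      intros; apply span_basis. rewrite !length_seq. lia. }
    apply not_indep in Hni. destruct Hni as [c [Hc [s [Hs Hcs]]]].
    assert (Hc' : forall i, (i < n)%nat -> Cadd (appv n A c i) (Cmul (c n) (mone i j)) = C0).
    { intros i Hi. rewrite <- (Hc i Hi). unfold comb. rewrite seq_S, sumC_app. simpl.
      replace (w n i) with (mone i j) by (unfold w; rewrite Nat.ltb_irrefl; reflexivity).
      assert (E : appv n A c i = sumC (seq 0 n) (fun s0 : nat => Cmul (c s0) (w s0 i))).
      { unfold appv. apply sumC_ext. intros l Hl. apply in_seq in Hl. unfold w.
        replace (Nat.ltb l n) with true by (symmetry; apply Nat.ltb_lt; lia). unfold cols. ring. }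
      rewrite E. ring. }
    destruct (classic (c n = C0)) as [Hcn|Hcn].
    + exfalso. apply Hcs. apply in_seq in Hs. destruct (Nat.eq_dec s n). subst; auto.
      apply (Hinj c). intros i Hi. rewrite <- (Hc' i Hi), Hcn. ring. lia.
    + exists (fun s => Cmul (Copp (Cinv (c n))) (c s)). intros _ i Hi.
      unfold appv. rewrite (sumC_ext _ _ (fun s => Cmul (Copp (Cinv (c n))) (Cmul (A i s) (c s)))).
      2:{ intros; ring. }
      rewrite sumC_mull. specialize (Hc' i Hi). unfold appv in Hc'.
      assert (E : sumC (seq 0 n) (fun j0 => Cmul (A i j0) (c j0)) = Copp (Cmul (c n) (mone i j))).
      { transitivity (Csub (Cadd (sumC (seq 0 n) (fun j0 => Cmul (A i j0) (c j0))) (Cmul (c n) (mone i j))) (Cmul (c n) (mone i j))). ring.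
        rewrite Hc'. ring. }
      rewrite E. field. auto.
  - exists (fun l j => X j l). intros i j Hi Hj. rewrite <- (HX j Hj i Hi). reflexivity.
Qed.

Lemma comb_mmul n M Z S c i : comb S c (cols (mmul n M Z)) i = appv n M (comb S c (cols Z)) i.
Proof.
  unfold comb, cols, appv, mmul.
  rewrite (sumC_ext S _ (fun s => sumC (seq 0 n) (fun l => Cmul (M i l) (Cmul (c s) (Z l s))))).
  - rewrite sumC_swap. apply sumC_ext; intros. rewrite sumC_mull. reflexivity.
  - intros. rewrite <- sumC_mull. apply sumC_ext; intros; ring.
Qed.

Definition injv n M := forall v, (forall i, (i < n)%nat -> appv n M v i = C0) -> forall i, (i < n)%nat -> v i = C0.

Lemma indep_left1 n M Z S : injv n M -> indep n S (cols Z) -> indep n S (cols (mmul n M Z)).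
Proof.
  intros HM HZ c Hc. apply HZ. apply HM. intros i Hi. rewrite <- comb_mmul. auto.
Qed.
Lemma indep_left2 n M Z S : indep n S (cols (mmul n M Z)) -> indep n S (cols Z).
Proof.
  intros H c Hc. apply H. intros i Hi. rewrite comb_mmul. unfold appv. apply sumC_zero.
  intros l Hl. apply in_seq in Hl. rewrite Hc by lia. ring.
Qed.

Lemma span_mmul n X Y s : in_span n (seq 0 n) (cols X) (cols (mmul n X Y) s).
Proof. exists (fun l => Y l s). intros i Hi. unfold cols, mmul, comb. apply sumC_ext; intros; ring. Qed.

Lemma span_ext n T w u u' : (forall i, (i < n)%nat -> u i = u' i) -> in_span n T w u' -> in_span n T w u.
Proof. intros H [d Hd]. exists d. intros i Hi. rewrite H; auto. Qed.

Lemma span_mmul_T n X Y T s : (forall l, (l < n)%nat -> in_span n T (cols X) (cols X l)) ->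
  in_span n T (cols X) (cols (mmul n X Y) s).
Proof.
  intros H. apply (span_ext n T (cols X) _ (comb (seq 0 n) (fun l => Y l s) (cols X))).
  - intros i Hi. unfold cols, mmul, comb. apply sumC_ext; intros; ring.
  - apply span_trans. intros l Hl. apply in_seq in Hl. apply H. lia.
Qed.

Lemma rank_pres n k rho M N1 N2 : rank_eq n rho k -> injv n M ->
  meq n (mmul n (mmul n rho N1) N2) rho -> rank_eq n (mmul n M (mmul n rho N1)) k.
Proof.
  intros [[T0 [[Hnd0 [Hlen0 Hlt0]] Hind0]] Hmax] HM HZ.
  set (Z := mmul n rho N1).
  assert (HspR : forall j, (j < n)%nat -> in_span n T0 (cols rho) (cols rho j)).
  { intros j Hj. destruct (In_dec Nat.eq_dec j T0) as [Hin|Hin]. apply span_self; auto.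
    apply Lext; auto. intro Hi. apply (Hmax (j :: T0)); auto.
    repeat split. constructor; auto. simpl; lia. intros j0 [E|E]; subst; auto. }
  assert (HspZ : forall s, (s < n)%nat -> in_span n T0 (cols rho) (cols Z s)).
  { intros s Hs. apply span_mmul_T. auto. }
  split.
  - destruct (Lmax n (cols Z) n) as [T' [Hnd' [Hlt' [Hind' Hsp']]]].
    assert (Hk : (k <= length T')%nat).
    { destruct (Compare_dec.le_lt_dec k (length T')) as [Hle|Hlt]; auto. exfalso.
      apply (L1 n T' (cols Z) T0 (cols rho)); auto. 2: lia.
      intros s Hs. apply (span_ext n T' (cols Z) _ (cols (mmul n Z N2) s)).
      - intros i Hi. unfold cols. symmetry. apply HZ; auto.
      - apply span_mmul_T. auto. }
    exists (firstn k T'). split.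
    + assert (Hsub : forall j, In j (firstn k T') -> In j T').
      { intros j Hj. rewrite <- (firstn_skipn k T'). apply in_or_app; auto. }
      repeat split.
      * rewrite <- (firstn_skipn k T') in Hnd'. eapply NoDup_app_remove_r; eauto.
      * apply firstn_length_le; auto.
      * intros j Hj. apply Hlt'. auto.
    + apply lin_indep_iff. apply indep_left1; auto. apply indep_firstn; auto.
  - intros S [HndS [HlenS HltS]] HiS. apply lin_indep_iff in HiS. apply indep_left2 in HiS.
    apply (L1 n T0 (cols rho) S (cols Z)); auto.
    lia.
Qed.
Lemma dpl_eq f x l l' : derivable_pt_lim f x l -> l = l' -> derivable_pt_lim f x l'.
Proof. intros H E; subst; auto. Qed.

Lemma deriv_poly p0 p1 p2 : derivable_pt_lim (fun t => p0 + t * p1 + t * t * p2) 0 p1.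
Proof.
  pose proof (derivable_pt_lim_plus _ _ 0 _ _
    (derivable_pt_lim_plus _ _ 0 _ _ (derivable_pt_lim_const p0 0)
       (derivable_pt_lim_mult _ _ 0 _ _ (derivable_pt_lim_id 0) (derivable_pt_lim_const p1 0)))
    (derivable_pt_lim_mult _ _ 0 _ _
       (derivable_pt_lim_mult _ _ 0 _ _ (derivable_pt_lim_id 0) (derivable_pt_lim_id 0))
       (derivable_pt_lim_const p2 0))) as H.
  eapply dpl_eq. exact H. unfold fct_cte, id, mult_fct, plus_fct. ring.
Qed.

Lemma deriv_rat p0 p1 p2 c1 c2 :
  derivable_pt_lim (fun t => (p0 + t * p1 + t * t * p2) / (1 + t * c1 + t * t * c2)) 0 (p1 - p0 * c1).
Proof.
  pose proof (derivable_pt_lim_div _ _ 0 _ _ (deriv_poly p0 p1 p2) (deriv_poly 1 c1 c2)) as H.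
  eapply dpl_eq. apply H. lra. unfold Rsqr. field_simplify; try lra.
Qed.

Lemma tau_pos a b t : Rabs t < / (2 * (Rabs a + Rabs b + 1)) -> 0 < 1 + t * a + t * t * b.
Proof.
  intros H. pose proof (Rabs_pos a); pose proof (Rabs_pos b); pose proof (Rabs_pos t).
  assert (Hd : 0 < 2 * (Rabs a + Rabs b + 1)) by lra.
  assert (Hs : Rabs t * (2 * (Rabs a + Rabs b + 1)) < 1).
  { apply (Rmult_lt_compat_r _ _ _ Hd) in H. rewrite Rinv_l in H; lra. }
  assert (Ha1 : - (Rabs t * Rabs a) <= t * a).
  { rewrite <- Rabs_mult. pose proof (Rle_abs (- (t * a))) as Hq. rewrite Rabs_Ropp in Hq. lra. }
  assert (Ha2 : - (Rabs t * Rabs t * Rabs b) <= t * t * b).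
  { rewrite <- !Rabs_mult. pose proof (Rle_abs (- (t * t * b))) as Hq. rewrite Rabs_Ropp in Hq. lra. }
  assert (Rabs t < 1) by nra.
  assert (Rabs t * Rabs t * Rabs b <= Rabs t * Rabs b).
  { assert (Rabs t * Rabs t <= Rabs t) by nra. nra. }
  nra.
Qed.

Section Curve.
Variables (n k : nat) (rho B : Mat).

Definition Mt (t : R) : Mat := madd mone (mscal (RtoC t) B).
Definition Pt (t : R) : Mat := mmul n (mmul n (Mt t) rho) (ctr (Mt t)).
Definition W1 : Mat := madd (mmul n B rho) (mmul n rho (ctr B)).
Definition W2 : Mat := mmul n (mmul n B rho) (ctr B).
Definition taut (t : R) : R := Re (tr n (Pt t)).
Definition gam (t : R) : Mat := mscal (RtoC (/ taut t)) (Pt t).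

Lemma ctr_Mt t : ctr (Mt t) = madd mone (mscal (RtoC t) (ctr B)).
Proof. unfold Mt. rewrite ctr_madd, ctr_mone, ctr_mscal_R. reflexivity. Qed.

Lemma Pt_expand t : meq n (Pt t) (madd rho (madd (mscal (RtoC t) W1) (mscal (RtoC (t * t)) W2))).
Proof.
  intros i j Hi Hj. unfold Pt. rewrite ctr_Mt. unfold Mt.
  rewrite !mmul_madd_l, !mmul_madd_r, !mmul_mscal_l, !mmul_mscal_r.
  unfold madd, mscal, W1, W2. rewrite !mmul_one_r by auto.
  rewrite (mmul_assoc n mone rho (ctr B)), !mmul_one_l by auto.
  unfold madd. rewrite RtoC_mul. ring.
Qed.

Hypothesis Hrho : density_rank n k rho.

Lemma rho_herm : Hermitian n rho. Proof. destruct Hrho; auto. Qed.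

Lemma Pt_alt t : Pt t = mmul n (Mt t) (mmul n rho (ctr (Mt t))).
Proof. unfold Pt. apply mmul_assoc. Qed.

Lemma Pt_herm t : Hermitian n (Pt t).
Proof.
  apply ctr_herm. rewrite Pt_alt at 1. rewrite !ctr_mmul, ctr_ctr.
  unfold Pt. apply mmul_meq_l. apply mmul_meq_r. apply herm_ctr. apply rho_herm.
Qed.

Definition c1 := Re (tr n W1).
Definition c2 := Re (tr n W2).

Lemma taut_eq t : taut t = 1 + t * c1 + t * t * c2.
Proof.
  unfold taut. rewrite (tr_meq _ _ _ (Pt_expand t)). rewrite !tr_madd, !tr_mscal.
  destruct Hrho as [_ [_ [Htr _]]]. rewrite Htr. unfold c1, c2. simpl. ring.
Qed.

Lemma tr_Pt t : tr n (Pt t) = RtoC (taut t).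
Proof. apply Ceq. reflexivity. simpl. apply tr_herm_real. apply Pt_herm. Qed.

Lemma Re_scal r z : Re (Cmul (RtoC r) z) = r * Re z.
Proof. simpl. ring. Qed.
Lemma Im_scal r z : Im (Cmul (RtoC r) z) = r * Im z.
Proof. simpl. ring. Qed.

Lemma gam_herm t : Hermitian n (gam t).
Proof.
  intros i j Hi Hj. unfold gam, mscal. rewrite (Pt_herm t i j Hi Hj). rewrite conj_mul, conj_RtoC. reflexivity.
Qed.

Lemma gam_tr t : taut t <> 0 -> tr n (gam t) = C1.
Proof. intros H. unfold gam. rewrite tr_mscal, tr_Pt. apply Ceq; simpl; field; auto. Qed.

Lemma quad_dot A x : sumC (seq 0 n) (fun i => sumC (seq 0 n)
                 (fun j => Cmul (Cconj (x i)) (Cmul (A i j) (x j)))) = dot n x (appv n A x).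
Proof. unfold dot, appv. apply sumC_ext; intros. apply sumC_mull. Qed.

Lemma gam_psd t : 0 < taut t -> PSD n (gam t).
Proof.
  intros Ht x. rewrite quad_dot. unfold gam.
  assert (E : dot n x (appv n (mscal (RtoC (/ taut t)) (Pt t)) x) = Cmul (RtoC (/ taut t)) (dot n x (appv n (Pt t) x))).
  { unfold dot, appv, mscal. rewrite <- sumC_mull. apply sumC_ext; intros.
    rewrite (sumC_ext _ _ (fun j => Cmul (RtoC (/ taut t)) (Cmul (Pt t i j) (x j)))).
    rewrite sumC_mull. ring. intros; ring. }
  rewrite E, Re_scal. apply Rmult_le_pos. left; apply Rinv_0_lt_compat; auto.
  rewrite Pt_alt, !appv_mmul, dot_adj. destruct Hrho as [_ [Hpsd _]].
  pose proof (Hpsd (appv n (ctr (Mt t)) x)) as H. rewrite quad_dot in H. exact H.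
Qed.

Lemma gam_factor t : gam t = mmul n (Mt t) (mmul n rho (mscal (RtoC (/ taut t)) (ctr (Mt t)))).
Proof. unfold gam. rewrite !mmul_mscal_r, <- mmul_assoc. reflexivity. Qed.

Lemma tangent_gen v : (forall i j, (i < n)%nat -> (j < n)%nat ->
    v i j = Csub (W1 i j) (Cmul (RtoC c1) (rho i j))) ->
  TangentTo n (density_rank n k) rho v.
Proof.
  intros Hv.
  destruct (inj_small n B) as [d1 [Hd1 HB1]]. destruct (inj_small n (ctr B)) as [d2 [Hd2 HB2]].
  set (e0 := / (2 * (Rabs c1 + Rabs c2 + 1))).
  assert (He0 : 0 < e0). { unfold e0. apply Rinv_0_lt_compat. pose proof (Rabs_pos c1); pose proof (Rabs_pos c2); lra. }
  exists (Rmin e0 (Rmin d1 d2)). split.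
  { apply Rmin_glb_lt; auto. apply Rmin_glb_lt; auto. }
  exists gam. split; [|split].
  - intros i j Hi Hj. unfold gam, mscal. rewrite (Pt_expand 0 i j Hi Hj), taut_eq.
    unfold madd, mscal. apply Ceq; simpl; field.
  - intros t Ht.
    assert (Hte0 : Rabs t < e0) by (eapply Rlt_le_trans; [exact Ht| apply Rmin_l]).
    assert (Htd : Rabs t < Rmin d1 d2) by (eapply Rlt_le_trans; [exact Ht| apply Rmin_r]).
    assert (Htd1 : Rabs t < d1) by (eapply Rlt_le_trans; [exact Htd| apply Rmin_l]).
    assert (Htd2 : Rabs t < d2) by (eapply Rlt_le_trans; [exact Htd| apply Rmin_r]).
    assert (Htau : 0 < taut t) by (rewrite taut_eq; apply tau_pos; auto).
    split; [apply gam_herm|split; [apply gam_psd; auto|split; [apply gam_tr; lra|]]].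
    destruct (rinv n (ctr (Mt t))) as [N HN].
    { rewrite ctr_Mt. intros w Hw. apply (HB2 t Htd2 w Hw). }
    rewrite gam_factor. apply (rank_pres n k rho (Mt t) _ (mscal (RtoC (taut t)) N)).
    + destruct Hrho as [_ [_ [_ Hr]]]; auto.
    + intros w Hw. apply (HB1 t Htd1 w Hw).
    + rewrite mmul_assoc. eapply meq_trans. apply mmul_meq_r.
      * instantiate (1 := mone). rewrite mmul_mscal_l, mmul_mscal_r. intros i j Hi Hj. unfold mscal.
        rewrite (HN i j Hi Hj). apply Ceq; simpl; field; lra.
      * intros i j Hi Hj. apply mmul_one_r; auto.
  - intros i j Hi Hj. split.
    + replace (fun t => Re (gam t i j)) with
        (fun t => (Re (rho i j) + t * Re (W1 i j) + t * t * Re (W2 i j)) / (1 + t * c1 + t * t * c2)).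
      * eapply dpl_eq. apply deriv_rat. rewrite Hv by auto. simpl. ring.
      * apply functional_extensionality; intro t. unfold gam, mscal. rewrite Re_scal.
        rewrite (Pt_expand t i j Hi Hj), taut_eq. unfold madd, mscal. simpl. unfold Rdiv. ring.
    + replace (fun t => Im (gam t i j)) with
        (fun t => (Im (rho i j) + t * Im (W1 i j) + t * t * Im (W2 i j)) / (1 + t * c1 + t * t * c2)).
      * eapply dpl_eq. apply deriv_rat. rewrite Hv by auto. simpl. ring.
      * apply functional_extensionality; intro t. unfold gam, mscal. rewrite Im_scal.
        rewrite (Pt_expand t i j Hi Hj), taut_eq. unfold madd, mscal. simpl. unfold Rdiv. ring.
Qed.

End Curve.
Lemma mone_herm n : Hermitian n mone.
Proof. intros i j _ _. unfold mone. destruct (Nat.eqb_spec j i); destruct (Nat.eqb_spec i j); subst;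
  try (exfalso; congruence); apply Ceq; simpl; ring. Qed.

Lemma herm_comb n b r : Hermitian n b -> Hermitian n (madd b (mscal (RtoC r) mone)).
Proof.
  intros Hb i j Hi Hj. unfold madd, mscal. rewrite Hb by auto. rewrite (mone_herm n i j Hi Hj).
  rewrite conj_add, conj_mul, conj_RtoC. reflexivity.
Qed.

Lemma f_line n b rho eta t : f_ n b (madd rho (mscal (RtoC t) eta)) = f_ n b rho + t * Re (tr n (mmul n eta b)).
Proof. unfold f_. rewrite mmul_madd_l, mmul_mscal_l, tr_madd, tr_mscal. simpl. ring. Qed.

Lemma fI_eq n X : f_ n mone X = Re (tr n X).
Proof. unfold f_. rewrite tr_mone_r. reflexivity. Qed.

Lemma IsDiff_e n b rho : Hermitian n b -> f_ n mone rho = 1 ->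
  IsDiff n (e_ n b) rho (madd b (mscal (RtoC (- f_ n b rho)) mone)).
Proof.
  intros Hb HI eta Heta.
  replace (fun t => e_ n b (madd rho (mscal (RtoC t) eta))) with
    (fun t => (f_ n b rho + t * Re (tr n (mmul n eta b)) + t * t * 0) / (1 + t * Re (tr n eta) + t * t * 0)).
  - eapply dpl_eq. apply deriv_rat.
    rewrite mmul_madd_l, mmul_mscal_l, tr_madd, tr_mscal, tr_mone_l, (tr_comm n b eta). simpl. ring.
  - apply functional_extensionality; intro t. unfold e_. rewrite !f_line, HI.
    rewrite tr_mone_r. f_equal; ring.
Qed.

Lemma IsDiff_fI n rho : IsDiff n (f_ n mone) rho mone.
Proof.
  intros eta Heta.
  replace (fun t => f_ n mone (madd rho (mscal (RtoC t) eta))) with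
    (fun t => (f_ n mone rho + t * Re (tr n (mmul n eta mone)) + t * t * 0) / (1 + t * 0 + t * t * 0)).
  - eapply dpl_eq. apply deriv_rat. rewrite tr_mone_r, tr_mone_l. ring.
  - apply functional_extensionality; intro t. rewrite f_line. field.
Qed.

Lemma decomp b r : b = madd (madd b (mscal (RtoC (- r)) mone)) (mscal (RtoC r) mone).
Proof. fext. unfold madd, mscal. apply Ceq; simpl; ring. Qed.

Lemma ctr_scal_herm n z a : Hermitian n a -> meq n (ctr (mscal z a)) (mscal (Cconj z) a).
Proof. intros Ha i j Hi Hj. unfold ctr, mscal. rewrite conj_mul, <- Ha by auto. reflexivity. Qed.

Lemma W1_scal n rho a z : Hermitian n a ->
  meq n (W1 n rho (mscal z a)) (madd (mscal z (mmul n a rho)) (mscal (Cconj z) (mmul n rho a))).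
Proof.
  intros Ha i j Hi Hj. unfold W1, madd. rewrite mmul_mscal_l.
  rewrite (mmul_meq_r _ _ _ _ (ctr_scal_herm n z a Ha) i j Hi Hj). rewrite mmul_mscal_r. reflexivity.
Qed.

Lemma trW1 n rho a z : Hermitian n a ->
  tr n (W1 n rho (mscal z a)) = Cmul (Cadd z (Cconj z)) (tr n (mmul n rho a)).
Proof.
  intros Ha. rewrite (tr_meq _ _ _ (W1_scal n rho a z Ha)). rewrite tr_madd, !tr_mscal, (tr_comm n a rho). ring.
Qed.
Theorem mainTheorem5 (n k : nat) (Lam Rt : Tensor2) :
  (1 <= k <= n)%nat ->
  is_Lambda_D n Lam -> is_R_D n Rt ->
  forall a : Mat, Hermitian n a ->
  forall rho : Mat, density_rank n k rho ->
  forall ca : Mat, Hermitian n ca -> IsDiff n (e_ n a) rho ca ->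
  let vX := mscal (mkC 0 (1/2)) (msub (mmul n a rho) (mmul n rho a)) in
  let vY := msub (jordan n a rho) (mscal (tr n (mmul n rho a)) rho) in
  (Hermitian n vX /\ represents_field n Lam rho ca vX /\
   TangentTo n (density_rank n k) rho vX) /\
  (Hermitian n vY /\ represents_field n Rt rho ca vY /\
   TangentTo n (density_rank n k) rho vY).
Proof.
  intros _ HL HR a Ha rho Hrho ca Hca Hdca vX vY.
  pose proof Hrho as [Hh [Hpsd [Htr Hrk]]].
  assert (HI : f_ n mone rho = 1).
  { rewrite fI_eq, Htr. reflexivity. }
  assert (HU : inU n rho) by (unfold inU; rewrite HI; lra).
  assert (HeI : forall b, e_ n b rho = f_ n b rho) by (intros b; unfold e_; rewrite HI; field).
  assert (HimA : Im (tr n (mmul n rho a)) = 0) by (apply tr_herm_prod_real; auto).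
  assert (HA : tr n (mmul n rho a) = RtoC (Re (tr n (mmul n rho a)))).
  { apply Ceq; simpl; auto. }
  assert (Cyc1 : forall cg, tr n (mmul n rho (mmul n a cg)) = tr n (mmul n cg (mmul n rho a))).
  { intros cg. rewrite (tr_comm n rho), mmul_assoc, (tr_comm n a), mmul_assoc. reflexivity. }
  assert (Cyc2 : forall cg, tr n (mmul n rho (mmul n cg a)) = tr n (mmul n cg (mmul n a rho))).
  { intros cg. rewrite (tr_comm n rho), mmul_assoc. reflexivity. }
  assert (Rep : forall T F, tensor_on_U_with n T F -> forall v,
     (forall cg, Hermitian n cg -> F a cg rho = Re (tr n (mmul n cg v))) ->
     represents_field n T rho ca v).
  { intros T F [Hbil Hten] v HF g cg Hcg _.
    set (r := f_ n cg rho).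
    set (cb := madd cg (mscal (RtoC (- r)) mone)).
    assert (Hcb : Hermitian n cb) by (apply herm_comb; auto).
    assert (Hdcb : IsDiff n (e_ n cg) rho cb) by (apply IsDiff_e; auto).
    destruct (Hten rho Hh HU a cg ca cb mone Ha Hcg Hca Hcb (mone_herm n) Hdca Hdcb (IsDiff_fI n rho))
      as [E1 [_ [E3 _]]].
    destruct (Hbil rho Hh HU cb mone ca r Hcb (mone_herm n) Hca) as [_ B2].
    rewrite (decomp cg r) at 1. fold cb. rewrite B2, E1, E3, <- HF by auto. ring. }
  split; [split; [|split] | split; [|split]].
  -
    intros i j Hi Hj. unfold vX, mscal, msub.
    rewrite (herm_mmul_conj n a rho i j Ha Hh Hi Hj), (herm_mmul_conj n rho a i j Hh Ha Hi Hj).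
    apply Ceq; simpl; ring.
  - apply (Rep Lam _ HL). intros cg Hcg. rewrite HeI. unfold f_, bracket, vX.
    rewrite !mmul_mscal_r, !mmul_msub_r, !tr_mscal, !tr_msub, Cyc1, Cyc2.
    apply (f_equal Re). apply Ceq; simpl; ring.
  - apply (tangent_gen n k rho (mscal (mkC 0 (1/2)) a) Hrho).
    intros i j Hi Hj. unfold c1. rewrite trW1 by auto.
    rewrite (W1_scal n rho a _ Ha i j Hi Hj). unfold vX, madd, mscal, msub. apply Ceq; simpl; ring.
  -
    intros i j Hi Hj. unfold vY, jordan, mscal, msub, madd.
    rewrite (herm_mmul_conj n a rho i j Ha Hh Hi Hj), (herm_mmul_conj n rho a i j Hh Ha Hi Hj), (Hh i j Hi Hj).
    rewrite HA. apply Ceq; simpl; ring.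
  - apply (Rep Rt _ HR). intros cg Hcg. rewrite !HeI. unfold f_, jordan, vY.
    unfold jordan. rewrite !mmul_msub_r, !mmul_mscal_r, !mmul_madd_r, tr_msub, !tr_mscal, !tr_madd, Cyc1, Cyc2.
    rewrite (tr_comm n cg rho).
    assert (HimA' : Im (tr n (mmul n rho a)) = 0) by auto.
    simpl. rewrite HimA'. ring.
  - apply (tangent_gen n k rho (mscal (RtoC (1/2)) a) Hrho).
    intros i j Hi Hj. unfold c1. rewrite trW1 by auto.
    rewrite (W1_scal n rho a _ Ha i j Hi Hj). unfold vY, jordan, madd, mscal, msub.
    rewrite HA. apply Ceq; simpl; lra.
Qed.
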